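(* Let $u \in W$ be rational with $u \neq w_0$. Then there exists a simple root $\alpha$ such that $u^{-1}(\alpha) > 0$ and $u(\alpha) < 0$.
   Context: $W$ is the Weyl group of a root system $\Pi$ with simple roots $\Delta$, positive roots $\Pi_+$, longest element $w_0$. $\gamma>0$ (resp. $<0$) means $\gamma$ is a positive (resp. negative) root. $\alpha\le\beta$ iff $\beta-\alpha$ is a nonnegative integer combination of simple roots. For $A\subseteq\Pi_+$, $\mathrm{Adj}(A) = \{\alpha\in\Pi_+ : \exists\beta\in A,\ \alpha\le\beta\}$. For $u\in W$: $\nu^0(u) = u(\Pi_+)\cap\Pi_+$, $\nu^k(u) = u(\mathrm{Adj}\,\nu^{k-1}(u))\cap\Pi_+$, eventually constant with value $\nu(u)$; $u$ is rational iff $\nu(u) = \emptyset$. *)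

(* Defs.v *)
From HB Require Import structures.
From mathcomp Require Import all_boot all_order all_algebra.
Set Implicit Arguments. Unset Strict Implicit. Unset Printing Implicit Defensive.
Import Order.TTheory GRing.Theory Num.Theory.
Local Open Scope ring_scope.

Section RootSystems.
Variables (R : realFieldType) (n : nat).
Local Notation V := 'cV[R]_n.

Definition dot (u v : V) : R := (u^T *m v) 0 0.

(* orthogonal reflection s_a : v |-> v - 2 (v,a)/(a,a) a, as a matrix *)
Definition refl (a : V) : 'M[R]_n := 1%:M - (2 / dot a a) *: (a *m a^T).

Definition root_system (Pi : seq V) : Prop :=
  [/\ uniq Pi /\ (0 : V) \notin Pi,
      (<<Pi>>%VS = fullv),
      (forall a b, a \in Pi -> b \in Pi -> refl a *m b \in Pi),
      (forall a b, a \in Pi -> b \in Pi ->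
         exists z : int, 2 * dot b a / dot a a = z%:~R) &
      (forall a (c : R), a \in Pi -> c *: a \in Pi -> c = 1 \/ c = -1)].

Definition nncomb (Delta : seq V) (v : V) : Prop :=
  exists c : 'I_(size Delta) -> nat,
    v = \sum_(i < size Delta) (c i)%:R *: Delta`_i.

Definition simple_system (Pi Delta : seq V) : Prop :=
  [/\ uniq Delta, {subset Delta <= Pi}, free Delta &
      (forall b, b \in Pi -> nncomb Delta b \/ nncomb Delta (- b))].

Definition pos_root (Pi Delta : seq V) (g : V) : Prop :=
  g \in Pi /\ nncomb Delta g.
Definition neg_root (Pi Delta : seq V) (g : V) : Prop :=
  g \in Pi /\ nncomb Delta (- g).

Definition rle (Delta : seq V) (a b : V) : Prop := nncomb Delta (b - a).

(* Weyl group: generated by the reflections s_a, a in Pi; u acts by v |-> u *m v *)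
Inductive in_weyl (Pi : seq V) : 'M[R]_n -> Prop :=
| weyl1 : in_weyl Pi 1%:M
| weylS a w : a \in Pi -> in_weyl Pi w -> in_weyl Pi (refl a *m w).

Definition simple_word (Delta : seq V) (w : 'M[R]_n) (k : nat) : Prop :=
  exists s : seq V, [/\ size s = k, {subset s <= Delta} &
    w = foldr (fun a m => refl a *m m) 1%:M s].

Definition longest (Pi Delta : seq V) (w0 : 'M[R]_n) : Prop :=
  in_weyl Pi w0 /\
  forall w, in_weyl Pi w -> forall k, simple_word Delta w0 k ->
    exists2 k', (k' <= k)%N & simple_word Delta w k'.

Definition Adj (Pi Delta : seq V) (A : V -> Prop) : V -> Prop :=
  fun a => pos_root Pi Delta a /\ exists2 b, A b & rle Delta a b.

Fixpoint nu (Pi Delta : seq V) (u : 'M[R]_n) (k : nat) : V -> Prop :=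
  match k with
  | 0 => fun g => pos_root Pi Delta g /\ exists2 a, pos_root Pi Delta a & g = u *m a
  | k'.+1 => fun g => pos_root Pi Delta g /\
       exists2 a, Adj Pi Delta (nu Pi Delta u k') a & g = u *m a
  end.

(* u is rational iff the eventual value nu(u) of nu^k(u) is empty *)
Definition rational (Pi Delta : seq V) (u : 'M[R]_n) : Prop :=
  exists K, forall k, (K <= k)%N -> forall g, ~ nu Pi Delta u k g.

End RootSystems.

(* Main.v *)
Require Import Defs.
From HB Require Import structures.
From mathcomp Require Import all_boot all_order all_algebra.
Set Implicit Arguments. Unset Strict Implicit. Unset Printing Implicit Defensive.
Import Order.TTheory GRing.Theory Num.Theory.
Local Open Scope ring_scope.

Lemma dotE (R : realFieldType) (n : nat) (a b : 'cV[R]_n) :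
  dot a b = \sum_i a i 0 * b i 0.
Proof. by rewrite /dot !mxE; apply: eq_bigr => i _; rewrite mxE. Qed.

Lemma dotC (R : realFieldType) (n : nat) (a b : 'cV[R]_n) : dot a b = dot b a.
Proof. by rewrite !dotE; apply: eq_bigr => i _; rewrite mulrC. Qed.

Lemma dot_gt0 (R : realFieldType) (n : nat) (a : 'cV[R]_n) : a != 0 -> 0 < dot a a.
Proof.
move=> a0; rewrite dotE lt_def; apply/andP; split; last first.
  by apply: sumr_ge0 => i _; rewrite -expr2 sqr_ge0.
have H0 : forall i : 'I_n, true -> 0 <= a i 0 * a i 0.
  by move=> i _; rewrite -expr2 sqr_ge0.
apply: contra a0 => /eqP /(psumr_eq0P H0) H; apply/eqP/matrixP => i j.
rewrite (ord1 j) mxE.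
have /eqP := H i isT.
by rewrite mulf_eq0 orbb => /eqP.
Qed.

Lemma dot_mx (R : realFieldType) (n : nat) (a b : 'cV[R]_n) :
  a^T *m b = (dot a b)%:M.
Proof. by apply/matrixP => i j; rewrite !ord1 [RHS]mxE /dot mulr1n. Qed.

Lemma refl_apply (R : realFieldType) (n : nat) (a b : 'cV[R]_n) :
  refl a *m b = b - (2 * dot a b / dot a a) *: a.
Proof.
rewrite /refl mulmxBl mul1mx -scalemxAl -mulmxA dot_mx.
by rewrite mul_mx_scalar scalerA mulrAC.
Qed.

Lemma refl_sym (R : realFieldType) (n : nat) (a : 'cV[R]_n) : (refl a)^T = refl a.
Proof. by rewrite /refl linearB /= linearZ /= trmx_mul trmxK trmx1. Qed.

Lemma refl_invol (R : realFieldType) (n : nat) (a : 'cV[R]_n) :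
  a != 0 -> refl a *m refl a = 1%:M.
Proof.
move=> a0; have d0 : dot a a != 0 by rewrite gt_eqF ?dot_gt0.
have PP : (a *m a^T) *m (a *m a^T) = dot a a *: (a *m a^T).
  by rewrite mulmxA -(mulmxA a) dot_mx mul_mx_scalar -scalemxAl.
rewrite /refl mulmxBl mul1mx mulmxBr mulmx1 -scalemxAl -scalemxAr PP scalerA.
set c := 2 / dot a a.
rewrite scalerA (_ : c * c * dot a a = c + c); last first.
  by rewrite -mulrA /c mulfVK // mulr_natr mulr2n.
rewrite scalerDl; set P := c *: _.
by rewrite opprB addrK subrK.
Qed.

Definition orth (R : realFieldType) (n : nat) (y : 'M[R]_n) := y^T *m y = 1%:M.

Lemma orthC (R : realFieldType) (n : nat) (y : 'M[R]_n) : orth y -> y *m y^T = 1%:M.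
Proof. exact: mulmx1C. Qed.

Lemma orth_refl (R : realFieldType) (n : nat) (a : 'cV[R]_n) : a != 0 -> orth (refl a).
Proof. by move=> a0; rewrite /orth refl_sym refl_invol. Qed.

Lemma orthM (R : realFieldType) (n : nat) (x y : 'M[R]_n) :
  orth x -> orth y -> orth (x *m y).
Proof.
by move=> ox oy; rewrite /orth trmx_mul mulmxA -(mulmxA y^T) ox mulmx1 oy.
Qed.

Lemma orth_inv (R : realFieldType) (n : nat) (y : 'M[R]_n) :
  orth y -> y \in unitmx /\ invmx y = y^T.
Proof.
move=> oy; have [_ yu] := mulmx1_unit oy; split => //.
by rewrite -[invmx y]mulmx1 -(orthC oy) mulmxA mulVmx // mul1mx.
Qed.

Lemma orth_dot (R : realFieldType) (n : nat) (y : 'M[R]_n) (a b : 'cV[R]_n) :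
  orth y -> dot (y *m a) (y *m b) = dot a b.
Proof. by move=> oy; rewrite /dot trmx_mul mulmxA -(mulmxA a^T) oy mulmx1. Qed.

Lemma refl_conj (R : realFieldType) (n : nat) (y : 'M[R]_n) (a : 'cV[R]_n) :
  orth y -> y *m refl a *m y^T = refl (y *m a).
Proof.
move=> oy; rewrite /refl orth_dot // mulmxBr mulmx1 mulmxBl orthC //.
by rewrite -scalemxAr -scalemxAl !mulmxA trmx_mul mulmxA.
Qed.

Definition wprod (R : realFieldType) (n : nat) (s : seq 'cV[R]_n) : 'M[R]_n :=
  foldr (fun a m => refl a *m m) 1%:M s.

Lemma wprod_cat (R : realFieldType) (n : nat) (s t : seq 'cV[R]_n) :
  wprod (s ++ t) = wprod s *m wprod t.
Proof. by elim: s => [|a s IH] /=; rewrite ?mul1mx // /wprod /= -/(wprod _) IH mulmxA. Qed.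

Lemma wprod_rcons (R : realFieldType) (n : nat) (s : seq 'cV[R]_n) a :
  wprod (rcons s a) = wprod s *m refl a.
Proof. by rewrite -cats1 wprod_cat /wprod /= mulmx1. Qed.

Lemma lc_inj (R : realFieldType) (n : nat) (D : seq 'cV[R]_n) (c d : 'I_(size D) -> R) :
  free D -> \sum_i c i *: D`_i = \sum_i d i *: D`_i -> forall i, c i = d i.
Proof.
move=> fD E i; apply/eqP; rewrite -subr_eq0; apply/eqP.
move/freeP: (fD : free (in_tuple D)) => /(_ (fun i => c i - d i)) -> //.
rewrite (eq_bigr (fun i => c i *: D`_i - d i *: D`_i)); last by move=> j _; rewrite scalerBl.
by rewrite sumrB E subrr.
Qed.

Lemma Pi_neq0 (R : realFieldType) (n : nat) (Pi : seq 'cV[R]_n) :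
  root_system Pi -> forall a, a \in Pi -> a != 0.
Proof. by case=> [[_ P0] _ _ _ _] a aP; apply: contraNneq P0 => <-. Qed.

Lemma Pi_refl (R : realFieldType) (n : nat) (Pi : seq 'cV[R]_n) :
  root_system Pi -> forall a b, a \in Pi -> b \in Pi -> refl a *m b \in Pi.
Proof. by case. Qed.

Lemma refl_self (R : realFieldType) (n : nat) (a : 'cV[R]_n) :
  a != 0 -> refl a *m a = - a.
Proof.
move=> a0; rewrite refl_apply mulfK ?gt_eqF ?dot_gt0 //.
by rewrite scaler_nat mulr2n opprD addrA subrr sub0r.
Qed.

Lemma Pi_opp (R : realFieldType) (n : nat) (Pi : seq 'cV[R]_n) :
  root_system Pi -> forall a, a \in Pi -> - a \in Pi.
Proof.
move=> hPi a aP; rewrite -refl_self ?(Pi_neq0 hPi) //; exact: Pi_refl.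
Qed.

Lemma refl_opp (R : realFieldType) (n : nat) (a : 'cV[R]_n) : refl (- a) = refl a.
Proof.
have E0 : (- a)^T = - a^T by apply/matrixP => i j; rewrite !mxE.
have E1 : (- a) *m (- a)^T = a *m a^T.
  by rewrite E0 mulNmx mulmxN opprK.
have E2 : dot (- a) (- a) = dot a a.
  by rewrite /dot E0 mulNmx mulmxN opprK.
by rewrite /refl E1 E2.
Qed.

Lemma weyl_Pi (R : realFieldType) (n : nat) (Pi : seq 'cV[R]_n) :
  root_system Pi -> forall w, in_weyl Pi w -> forall b, b \in Pi -> w *m b \in Pi.
Proof.
move=> hPi w; elim=> [|a w' aP _ IH] b bP; first by rewrite mul1mx.
by rewrite -mulmxA; apply: Pi_refl => //; apply: IH.
Qed.

Lemma weyl_orth (R : realFieldType) (n : nat) (Pi : seq 'cV[R]_n) :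
  root_system Pi -> forall w, in_weyl Pi w -> orth w.
Proof.
move=> hPi w; elim=> [|a w' aP _ IH]; first by rewrite /orth trmx1 mulmx1.
by apply: orthM => //; apply: orth_refl; apply: (Pi_neq0 hPi).
Qed.

Lemma weyl_trPi (R : realFieldType) (n : nat) (Pi : seq 'cV[R]_n) :
  root_system Pi -> forall w, in_weyl Pi w -> forall b, b \in Pi -> w^T *m b \in Pi.
Proof.
move=> hPi w; elim=> [|a w' aP _ IH] b bP; first by rewrite trmx1 mul1mx.
rewrite trmx_mul refl_sym -mulmxA; apply: IH; exact: Pi_refl.
Qed.

Lemma weylM (R : realFieldType) (n : nat) (Pi : seq 'cV[R]_n) :
  forall w, in_weyl Pi w -> forall w', in_weyl Pi w' -> in_weyl Pi (w *m w').
Proof.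
move=> w; elim=> [|a w1 aP _ IH] w' hw'; first by rewrite mul1mx.
by rewrite -mulmxA; apply: weylS => //; apply: IH.
Qed.

Lemma nncomb0 (R : realFieldType) (n : nat) (D : seq 'cV[R]_n) : nncomb D 0.
Proof. by exists (fun _ => 0%N); rewrite big1 // => i _; rewrite scale0r. Qed.

Lemma nncombD (R : realFieldType) (n : nat) (D : seq 'cV[R]_n) x y :
  nncomb D x -> nncomb D y -> nncomb D (x + y).
Proof.
move=> [c ->] [d ->]; exists (fun i => c i + d i)%N; rewrite -big_split /=.
by apply: eq_bigr => i _; rewrite natrD scalerDl.
Qed.

Lemma nncombZ (R : realFieldType) (n : nat) (D : seq 'cV[R]_n) (k : nat) x :
  nncomb D x -> nncomb D (k%:R *: x).
Proof.
move=> [c ->]; exists (fun i => k * c i)%N; rewrite scaler_sumr.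
by apply: eq_bigr => i _; rewrite natrM scalerA.
Qed.

Lemma nncomb_sum (R : realFieldType) (n : nat) (D : seq 'cV[R]_n) m (c : 'I_m -> nat) f :
  (forall i, nncomb D (f i)) -> nncomb D (\sum_(i < m) (c i)%:R *: f i).
Proof.
move=> H; apply: (big_ind (nncomb D)); [exact: nncomb0|exact: nncombD|].
by move=> i _; apply: nncombZ.
Qed.

Lemma nncomb_simple (R : realFieldType) (n : nat) (D : seq 'cV[R]_n) (j : 'I_(size D)) :
  nncomb D D`_j.
Proof.
exists (fun i => (i == j)%N); rewrite (bigD1 j) //= eqxx scale1r big1 ?addr0 //.
by move=> i /negbTE ->; rewrite scale0r.
Qed.

Lemma nncomb_opp0 (R : realFieldType) (n : nat) (D : seq 'cV[R]_n) b :
  free D -> nncomb D b -> nncomb D (- b) -> b = 0.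
Proof.
move=> fD [c Ec] [d Ed].
have : \sum_(i < size D) ((addn (c i) (d i))%:R : R) *: D`_i = \sum_(i < size D) (0 : R) *: D`_i.
  rewrite (eq_bigr (fun i => (c i)%:R *: D`_i + (d i)%:R *: D`_i)); last first.
    by move=> i _; rewrite natrD scalerDl.
  by rewrite big_split /= -Ec -Ed subrr big1 // => i _; rewrite scale0r.
move/(lc_inj fD) => H; rewrite Ec big1 // => i _.
have := H i; move/eqP; rewrite pnatr_eq0 addn_eq0 => /andP[/eqP -> _].
by rewrite scale0r.
Qed.

Lemma Delta_Pi (R : realFieldType) (n : nat) (Pi Delta : seq 'cV[R]_n) :
  simple_system Pi Delta -> forall j : 'I_(size Delta), Delta`_j \in Pi.
Proof. by case=> _ sub _ _ j; apply: sub; apply: mem_nth. Qed.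

Lemma refl_simple_pos (R : realFieldType) (n : nat) (Pi Delta : seq 'cV[R]_n) :
  root_system Pi -> simple_system Pi Delta ->
  forall (j : 'I_(size Delta)) a, pos_root Pi Delta a -> a != Delta`_j ->
  pos_root Pi Delta (refl Delta`_j *m a).
Proof.
move=> hPi hD j a [aP [c Ea]] neq.
have jP := Delta_Pi hD j.
have bP : refl Delta`_j *m a \in Pi by apply: Pi_refl.
split => //.
have [_ _ fD dich] := hD.
case: (dich _ bP) => // -[d Ed]; exfalso.
move: Ed; rewrite refl_apply opprB.
set k := 2 * _ / _ => Ed.
have E : \sum_(i < size Delta) (((c i)%:R + (d i)%:R) : R) *: Delta`_i =
         \sum_(i < size Delta) (if i == j then k else 0) *: Delta`_i.
  rewrite (eq_bigr (fun i => (c i)%:R *: Delta`_i + (d i)%:R *: Delta`_i)); last first.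
    by move=> i _; rewrite scalerDl.
  rewrite big_split /= -Ea -Ed addrC subrK (bigD1 j) //= eqxx big1 ?addr0 //.
  by move=> i /negbTE ->; rewrite scale0r.
have H := lc_inj fD E.
have Ea' : a = (c j)%:R *: Delta`_j.
  rewrite Ea (bigD1 j) //= big1 ?addr0 // => i ij.
  have := H i; rewrite (negbTE ij) => /eqP; rewrite -natrD pnatr_eq0 addn_eq0.
  by case/andP => /eqP -> _; rewrite scale0r.
have [_ _ _ _ red] := hPi.
have aP' : (c j)%:R *: Delta`_j \in Pi by rewrite -Ea'.
case: (red _ _ jP aP') => cj.
  by move: neq; rewrite Ea' cj scale1r eqxx.
move/eqP: cj; rewrite -subr_eq0 opprK -(natrD _ _ 1) pnatr_eq0 addn1 //.
Qed.

Lemma mem_Delta_idx (R : realFieldType) (n : nat) (Delta : seq 'cV[R]_n) t :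
  t \in Delta -> exists j : 'I_(size Delta), t = Delta`_j.
Proof.
move=> tD; exists (Ordinal (ltac:(by rewrite index_mem) : (index t Delta < size Delta)%N)).
by rewrite /= nth_index.
Qed.

Lemma wprod_Pi (R : realFieldType) (n : nat) (Pi : seq 'cV[R]_n) :
  root_system Pi -> forall s, {subset s <= Pi} -> forall b, b \in Pi -> wprod s *m b \in Pi.
Proof.
move=> hPi; elim=> [|t s IH] sub b bP; first by rewrite mul1mx.
rewrite /wprod /= -/(wprod s) -mulmxA; apply: Pi_refl => //.
  by apply: sub; rewrite inE eqxx.
by apply: IH => // x xs; apply: sub; rewrite inE xs orbT.
Qed.

Lemma wprod_orth (R : realFieldType) (n : nat) (Pi : seq 'cV[R]_n) :
  root_system Pi -> forall s, {subset s <= Pi} -> orth (wprod s).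
Proof.
move=> hPi; elim=> [|t s IH] sub; first by rewrite /orth trmx1 mulmx1.
rewrite /wprod /= -/(wprod s); apply: orthM.
  by apply: orth_refl; apply: (Pi_neq0 hPi); apply: sub; rewrite inE eqxx.
by apply: IH => // x xs; apply: sub; rewrite inE xs orbT.
Qed.

Lemma wprod_weyl (R : realFieldType) (n : nat) (Pi : seq 'cV[R]_n) :
  forall s, {subset s <= Pi} -> in_weyl Pi (wprod s).
Proof.
elim=> [|t s IH] sub; first exact: weyl1.
rewrite /wprod /= -/(wprod s); apply: weylS; first by apply: sub; rewrite inE eqxx.
by apply: IH => // x xs; apply: sub; rewrite inE xs orbT.
Qed.

Lemma deletion (R : realFieldType) (n : nat) (Pi Delta : seq 'cV[R]_n) :
  root_system Pi -> simple_system Pi Delta ->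
  forall s, {subset s <= Delta} -> forall j : 'I_(size Delta),
  nncomb Delta (- (wprod s *m Delta`_j)) ->
  exists s', [/\ (size s').+1 = size s, {subset s' <= Delta} &
                 wprod s' = wprod s *m refl Delta`_j].
Proof.
move=> hPi hD; have [_ subDP fD dich] := hD.
have jP := Delta_Pi hD.
elim=> [|t s IH] sub j neg.
  exfalso; move: neg; rewrite mul1mx => neg.
  have := nncomb_opp0 fD (nncomb_simple j) neg.
  by move/eqP; apply/negP; apply: (Pi_neq0 hPi).
have tD : t \in Delta by apply: sub; rewrite inE eqxx.
have subs : {subset s <= Delta} by move=> x xs; apply: sub; rewrite inE xs orbT.
have subsP : {subset s <= Pi} by move=> x /subs; apply: subDP.
set y := wprod s.
have yaP : y *m Delta`_j \in Pi by apply: wprod_Pi.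
move: neg; rewrite /wprod /= -/(wprod s) -/y => neg.
case: (dich _ yaP) => [ypos|yneg].
  have [i ti] := mem_Delta_idx tD.
  have ya : y *m Delta`_j = t.
    apply/eqP; apply/negPn/negP => ne.
    have ne' : y *m Delta`_j != Delta`_i by rewrite -ti.
    have := refl_simple_pos hPi hD (conj yaP ypos) ne'.
    rewrite -ti mulmxA => -[bP bpos].
    have := nncomb_opp0 fD bpos neg; move/eqP; apply/negP; exact: (Pi_neq0 hPi).
  exists s; split => //.
  have oy : orth y by apply: (wprod_orth hPi).
  rewrite -ya -(refl_conj _ oy) -!mulmxA (mulmxA y^T) oy mul1mx.
  by rewrite refl_invol ?mulmx1 // (Pi_neq0 hPi).
have [s1 [sz sub1 E1]] := IH subs j yneg.
exists (t :: s1); split => //=; first by rewrite sz.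
  by move=> x; rewrite inE => /orP[/eqP ->|/sub1].
by rewrite /wprod /= -/(wprod s1) E1 mulmxA.
Qed.

Lemma wprod_fix (R : realFieldType) (n : nat) (Pi Delta : seq 'cV[R]_n) :
  root_system Pi -> simple_system Pi Delta ->
  forall s, {subset s <= Delta} ->
  (forall j : 'I_(size Delta), nncomb Delta (wprod s *m Delta`_j)) -> wprod s = 1%:M.
Proof.
move=> hPi hD s; move: {2}(size s) (leqnn (size s)) => N; elim: N s => [|N IH] s.
  by rewrite leqn0 => /nilP -> _ _.
case/lastP: s => [|s1 t] // szs sub H.
have tD : t \in Delta by apply: sub; rewrite mem_rcons inE eqxx.
have sub1 : {subset s1 <= Delta} by move=> x xs; apply: sub; rewrite mem_rcons inE xs orbT.
have [j tj] := mem_Delta_idx tD.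
have neg : nncomb Delta (- (wprod s1 *m Delta`_j)).
  have := H j; rewrite wprod_rcons -mulmxA -tj refl_self.
    by rewrite mulmxN tj.
  by rewrite tj; apply: (Pi_neq0 hPi); apply: Delta_Pi.
have [s2 [sz2 sub2 E2]] := deletion hPi hD sub1 neg.
rewrite wprod_rcons tj -E2; apply: IH => //.
  by move: szs; rewrite size_rcons -sz2 ltnS => /ltnW.
by move=> i; rewrite E2 -tj -wprod_rcons.
Qed.

Lemma dot_lc (R : realFieldType) (n : nat) (D : seq 'cV[R]_n) (k : 'I_(size D) -> R) a :
  dot a (\sum_(i < size D) k i *: D`_i) = \sum_(i < size D) k i * dot a D`_i.
Proof.
rewrite /dot mulmx_sumr summxE; apply: eq_bigr => i _.
by rewrite -scalemxAr mxE.
Qed.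

Lemma refl_word_pos (R : realFieldType) (n : nat) (Pi Delta : seq 'cV[R]_n) :
  root_system Pi -> simple_system Pi Delta ->
  forall N a (c : 'I_(size Delta) -> nat), a \in Pi ->
  a = \sum_(i < size Delta) (c i)%:R *: Delta`_i -> (\sum_i c i <= N)%N ->
  exists2 s, {subset s <= Delta} & wprod s = refl a.
Proof.
move=> hPi hD; have [_ subDP fD dich] := hD.
have [_ _ _ cryst _] := hPi.
elim=> [|N IH] a c aP Ea szc.
  exfalso; move: szc; rewrite leqn0 sum_nat_eq0 => /forallP H.
  have : a == 0.
    by rewrite Ea big1 // => i _; have /implyP/(_ isT)/eqP -> := H i; rewrite scale0r.
  by apply/negP; apply: (Pi_neq0 hPi).
have a0 : a != 0 by apply: (Pi_neq0 hPi).
have : [exists i, 0 < (c i)%:R * dot a Delta`_i].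
  rewrite -[X in is_true X]negbK; apply/negP => /existsPn H.
  have : dot a a <= 0.
    rewrite {2}Ea dot_lc; apply: sumr_le0 => j _.
    by rewrite leNgt H.
  by rewrite leNgt dot_gt0.
case/existsP => i /= pi.
have ci : (0 < c i)%N.
  by rewrite lt0n; apply: contraTneq pi => ->; rewrite mul0r ltxx.
have di : 0 < dot a Delta`_i.
  by move: pi; rewrite pmulr_rgt0 // ltr0n.
have iP := Delta_Pi hD i.
have i0 : Delta`_i != 0 by apply: (Pi_neq0 hPi).
case: (eqVneq a Delta`_i) => [->|ne].
  by exists [:: Delta`_i]; [move=> x; rewrite inE => /eqP ->; apply: mem_nth|rewrite /wprod /= mulmx1].
have [bP [d Ed]] := refl_simple_pos hPi hD (conj aP (ex_intro _ c Ea)) ne.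
set b := refl Delta`_i *m a in bP Ed.
have [z Ez] := cryst _ _ iP aP.
have kpos : 0 < 2 * dot a Delta`_i / dot Delta`_i Delta`_i.
  by rewrite divr_gt0 ?mulr_gt0 ?dot_gt0.
have [m Em] : exists m : nat, z = Posz m.
  by case: z Ez => [m|m] Ez; [exists m|by move: kpos; rewrite Ez ltr0z].
have m0 : (0 < m)%N.
  by move: kpos; rewrite Ez Em ltr0z.
have Eb : b = a - m%:R *: Delta`_i.
  by rewrite /b refl_apply dotC Ez Em -pmulrn.
have E : \sum_(j < size Delta) ((c j)%:R : R) *: Delta`_j =
         \sum_(j < size Delta) (((d j)%:R + (if j == i then m%:R else 0)) : R) *: Delta`_j.
  rewrite -Ea (eq_bigr (fun j => (d j)%:R *: Delta`_j + (if j == i then m%:R else 0) *: Delta`_j)); last first.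
    by move=> j _; rewrite scalerDl.
  rewrite big_split /= -Ed Eb (bigD1 i) //= eqxx big1 ?addr0 ?subrK //.
  by move=> j /negbTE ->; rewrite scale0r.
have Ec : forall j, c j = (d j + (if j == i then m else 0))%N.
  move=> j; have := lc_inj fD E j; case: (j == i) => /= H; apply/eqP;
  by rewrite -(eqr_nat R) ?natrD H ?addr0 ?addn0.
have szd : (\sum_j d j <= N)%N.
  move: szc; rewrite (eq_bigr _ (fun j _ => Ec j)) big_split /= -big_mkcond big_pred1_eq.
  by move=> H; rewrite -ltnS; apply: leq_trans H; rewrite -addn1 leq_add2l.
have [sb sub Eb'] := IH b d bP Ed szd.
exists (Delta`_i :: rcons sb Delta`_i).
  move=> x; rewrite inE mem_rcons inE orbA orbb => /orP[/eqP ->|/sub //].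
  exact: mem_nth.
have oi : orth (refl Delta`_i) by apply: orth_refl.
rewrite /wprod /= -/(wprod _) wprod_rcons Eb' /b -(refl_conj _ oi) refl_sym.
by rewrite !mulmxA refl_invol // mul1mx -mulmxA refl_invol // mulmx1.
Qed.

Lemma refl_word (R : realFieldType) (n : nat) (Pi Delta : seq 'cV[R]_n) :
  root_system Pi -> simple_system Pi Delta ->
  forall a, a \in Pi -> exists2 s, {subset s <= Delta} & wprod s = refl a.
Proof.
move=> hPi hD a aP; have [_ _ _ dich] := hD.
case: (dich _ aP) => -[c Ec].
  exact: (refl_word_pos hPi hD aP Ec (leqnn _)).
rewrite -refl_opp; exact: (refl_word_pos hPi hD (Pi_opp hPi aP) Ec (leqnn _)).
Qed.

Lemma weyl_word (R : realFieldType) (n : nat) (Pi Delta : seq 'cV[R]_n) :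
  root_system Pi -> simple_system Pi Delta ->
  forall w, in_weyl Pi w -> exists2 s, {subset s <= Delta} & wprod s = w.
Proof.
move=> hPi hD w; elim=> [|a w' aP _ [s sub <-]]; first by exists [::].
have [t subt Et] := refl_word hPi hD aP.
exists (t ++ s); last by rewrite wprod_cat Et.
by move=> x; rewrite mem_cat => /orP[/subt|/sub].
Qed.

Lemma wprod_tr (R : realFieldType) (n : nat) (s : seq 'cV[R]_n) :
  (wprod s)^T = wprod (rev s).
Proof.
elim: s => [|a s IH]; first by rewrite /wprod /= trmx1.
by rewrite /wprod /= -/(wprod s) trmx_mul IH refl_sym rev_cons -cats1 -/(wprod _) wprod_cat /wprod /= mulmx1.
Qed.

Lemma w0_neg (R : realFieldType) (n : nat) (Pi Delta : seq 'cV[R]_n) :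
  root_system Pi -> simple_system Pi Delta ->
  forall w0, longest Pi Delta w0 ->
  forall j : 'I_(size Delta), nncomb Delta (- (w0 *m Delta`_j)).
Proof.
move=> hPi hD w0 [hw0 lw0] j; have [_ subDP fD dich] := hD.
have jP := Delta_Pi hD j.
have wjP : w0 *m Delta`_j \in Pi by apply: weyl_Pi.
case: (dich _ wjP) => // pos; exfalso.
have [s0 sub0 E0] := weyl_word hPi hD hw0.
suff : forall k, simple_word Delta w0 k -> False.
  by move/(_ (size s0)); apply; exists s0.
elim/ltn_ind => k IH [t [szt subt Et]].
set x := w0 *m refl Delta`_j.
have hx : in_weyl Pi x by apply: weylM => //; rewrite -[refl _]mulmx1; apply: weylS => //; exact: weyl1.
have [k' lek [t' [szt' subt' Et']]] := lw0 x hx k (ex_intro _ t (And3 szt subt Et)).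
have Ex : wprod t' = x by rewrite Et'.
have neg : nncomb Delta (- (wprod t' *m Delta`_j)).
  by rewrite Ex /x -mulmxA refl_self ?(Pi_neq0 hPi) // mulmxN opprK.
have [s' [sz' sub' E']] := deletion hPi hD subt' neg.
apply: (IH (size s')); last first.
  exists s'; split => //; rewrite -/(wprod s') E' Ex /x -mulmxA refl_invol ?mulmx1 //.
  exact: (Pi_neq0 hPi).
by rewrite -ltnS sz' szt' ltnS.
Qed.

Lemma all_neg_w0 (R : realFieldType) (n : nat) (Pi Delta : seq 'cV[R]_n) :
  root_system Pi -> simple_system Pi Delta ->
  forall w0, longest Pi Delta w0 -> forall u, in_weyl Pi u ->
  (forall a, pos_root Pi Delta a -> nncomb Delta (- (u *m a))) -> u = w0.
Proof.
move=> hPi hD w0 lw0 u hu H; have [_ subDP fD dich] := hD.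
have hw0 := lw0.1.
have ow0 := weyl_orth hPi hw0.
have trneg : forall b, pos_root Pi Delta b -> nncomb Delta (- (w0^T *m b)).
  move=> b [bP bpos]; have tbP : w0^T *m b \in Pi by apply: weyl_trPi.
  case: (dich _ tbP) => // -[c Ec]; exfalso.
  have : nncomb Delta (- b).
    rewrite -[b]mul1mx -(orthC ow0) -mulmxA Ec mulmx_sumr -sumrN.
    rewrite (eq_bigr (fun i => (c i)%:R *: (- (w0 *m Delta`_i)))); last first.
      by move=> i _; rewrite -scalemxAr scalerN.
    by apply: nncomb_sum => i; apply: (w0_neg hPi hD lw0).
  move/(nncomb_opp0 fD bpos)/eqP; apply/negP; exact: (Pi_neq0 hPi).
have [s0 sub0 E0] := weyl_word hPi hD hw0.
have [su subu Eu] := weyl_word hPi hD hu.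
have Ez : wprod (rev s0 ++ su) = w0^T *m u by rewrite wprod_cat -wprod_tr E0 Eu.
have z1 : wprod (rev s0 ++ su) = 1%:M.
  apply: (wprod_fix hPi hD).
    by move=> x; rewrite mem_cat mem_rev => /orP[/sub0|/subu].
  move=> j; rewrite Ez -mulmxA.
  have jpos : pos_root Pi Delta Delta`_j by split; [exact: Delta_Pi|exact: nncomb_simple].
  have ujP : - (u *m Delta`_j) \in Pi by apply: Pi_opp => //; apply: weyl_Pi => //; case: jpos.
  have := trneg _ (conj ujP (H _ jpos)).
  by rewrite mulmxN opprK.
by rewrite -[u]mul1mx -(orthC ow0) -mulmxA -Ez z1 mulmx1.
Qed.

From Stdlib Require Import Classical.

Lemma first_empty (P : nat -> Prop) K : P 0 -> ~ P K -> exists k, P k /\ ~ P k.+1.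
Proof.
move=> P0; elim: K => [|K IH] nK; first by [].
case: (classic (P K)) => [PK|nPK]; first by exists K.
exact: IH.
Qed.

Unset Implicit Arguments.
Set Strict Implicit.

Theorem lemma4 (R : realFieldType) (n : nat) (Pi Delta : seq 'cV[R]_n)
  (hPi : root_system Pi) (hDelta : simple_system Pi Delta)
  (w0 : 'M[R]_n) (hw0 : longest Pi Delta w0)
  (u : 'M[R]_n) (hu : in_weyl Pi u) (hrat : rational Pi Delta u) (hne : u <> w0) :
  exists2 alpha, alpha \in Delta &
    pos_root Pi Delta (invmx u *m alpha) /\ neg_root Pi Delta (u *m alpha).
Proof.
have [_ subDP fD dich] := hDelta.
have ou := weyl_orth hPi hu.
have [uu invu] := orth_inv ou.
have nu0 : exists g, nu Pi Delta u 0 g.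
  apply: NNPP => N0; apply: hne; apply: (all_neg_w0 hPi hDelta hw0 hu).
  move=> a [aP apos]; have uaP : u *m a \in Pi by apply: weyl_Pi.
  case: (dich _ uaP) => // upos; exfalso; apply: N0.
  by exists (u *m a); split; [split|exists a].
have [K HK] := hrat.
have [k [[g gk] nk1]] := first_empty (P := fun k => exists g, nu Pi Delta u k g) nu0
  (fun H => let: ex_intro g Hg := H in HK K (leqnn K) g Hg).
have [gpos [a apos ga]] : pos_root Pi Delta g /\ exists2 a, pos_root Pi Delta a & g = u *m a.
  case: k gk nk1 => [|k] /= [gp [a Ha ga]] _; split => //; exists a => //.
  by case: Ha.
have [gP [c Ec]] := gpos.
have tga : u^T *m g = a by rewrite ga mulmxA (ou) mul1mx.
have [i ci ipos] : exists2 i : 'I_(size Delta), (0 < c i)%N & nncomb Delta (u^T *m Delta`_i).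
  apply: NNPP => Hn; exfalso.
  have : nncomb Delta (- a).
    rewrite -tga Ec mulmx_sumr -sumrN.
    rewrite (eq_bigr (fun i => (c i)%:R *:
        (if (c i == 0)%N then 0 else - (u^T *m Delta`_i)))); last first.
      move=> i _; case: eqP => [->|_]; first by rewrite !scale0r mulmx0 oppr0.
      by rewrite -scalemxAr scalerN.
    apply: nncomb_sum => i; case: eqP => [_|/eqP ci]; first exact: nncomb0.
    have tiP : u^T *m Delta`_i \in Pi by apply: weyl_trPi => //; exact: Delta_Pi.
    case: (dich _ tiP) => // ip; exfalso; apply: Hn; exists i => //.
    by rewrite lt0n.
  have [aP' apos'] := apos.
  move/(nncomb_opp0 fD apos')/eqP; apply/negP; exact: (Pi_neq0 hPi).
have iP := Delta_Pi hDelta i.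
exists Delta`_i; first exact: mem_nth.
split.
  by rewrite invu; split => //; apply: weyl_trPi.
have uiP : u *m Delta`_i \in Pi by apply: weyl_Pi.
split => //.
case: (dich _ uiP) => // upos; exfalso; apply: nk1.
exists (u *m Delta`_i) => /=; split; first by split.
exists Delta`_i => //; split; first by split => //; exact: nncomb_simple.
exists g => //.
exists (fun j => c j - (j == i))%N.
rewrite Ec (bigD1 i) //= [in RHS](bigD1 i) //= eqxx subn1.
rewrite [X in _ = _ + X](eq_bigr (fun j => (c j)%:R *: Delta`_j)); last first.
  by move=> j /negbTE ->; rewrite subn0.
by rewrite -{1}(prednK ci) -natr1 scalerDl scale1r addrAC addrK.
Qed.
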